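(* For any integer $n\ge3$, with $P_n$ the path of order $n$, $$\gamma_{(2,2,2)}(P_n)=2\gamma_t(P_n)=\begin{cases} n & \text{if } n\equiv 0\pmod 4,\\ n+1 & \text{if } n\equiv 1,3\pmod 4,\\ n+2 & \text{if } n\equiv 2\pmod 4.\end{cases}$$
   Context: $N(v)$ is the open neighbourhood. $\gamma_{(2,2,2)}(G)$ is the minimum of $\sum_v f(v)$ over functions $f:V(G)\to\{0,1,2\}$ with $\sum_{u\in N(v)}f(u)\ge2$ for every vertex $v$. $\gamma_t(G)$ is the total domination number (minimum size of $S$ such that every vertex has a neighbour in $S$). *)

(* Defs.v *)
From mathcomp Require Import all_boot all_order.
Set Implicit Arguments. Unset Strict Implicit. Unset Printing Implicit Defensive.

(* A (simple) graph on a finite vertex type T is given by its adjacency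
   relation adj; the open neighbourhood of v is [set u | adj v u]. *)

Definition path_adj (n : nat) : rel 'I_n :=
  fun i j => (i.+1 == j :> nat) || (j.+1 == i :> nat).

Definition is_222_fun (T : finType) (adj : rel T) (f : {ffun T -> 'I_3}) : bool :=
  [forall v, 2 <= \sum_(u | adj v u) (f u : nat)].

Definition weight (T : finType) (f : {ffun T -> 'I_3}) : nat :=
  \sum_v (f v : nat).

(* gamma_{(2,2,2)}: minimum weight of a (2,2,2)-domination function.
   (Default value 2*#|T| if none exists; irrelevant for paths with n >= 3,
   where the constant function 2 is valid... in fact for any graph without
   isolated vertices.) *)
Definition gamma222 (T : finType) (adj : rel T) : nat :=
  \big[minn/(2 * #|T|)]_(f : {ffun T -> 'I_3} | is_222_fun adj f) weight f.

Definition is_total_dom (T : finType) (adj : rel T) (S : {set T}) : bool :=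
  [forall v, [exists u in S, adj v u]].

Definition gamma_t (T : finType) (adj : rel T) : nat :=
  \big[minn/#|T|]_(S : {set T} | is_total_dom adj S) #|S|.

(* Main.v *)
Require Import Defs.
From mathcomp Require Import all_boot all_order zify.

Definition V (n : nat) := if n %% 4 == 0 then n else if n %% 4 == 2 then n + 2 else n + 1.
Definition c0 (i : nat) : bool := i %% 4 < 2.
Definition c1 (i : nat) : bool := (i %% 4 == 1) || (i %% 4 == 2).

Lemma Vstep0 n : V n.+1 = V n + 2 * c0 n.
Proof.
rewrite /V /c0; have := ltn_pmod n (isT : 0 < 4).
case: (ltnP (n %% 4) 2) => h; repeat case: eqP => ?; lia.
Qed.

Lemma Vstep1 n : V n.+1 = V n + 2 * c1 n.+1.
Proof.
rewrite /V /c1; have := ltn_pmod n (isT : 0 < 4).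
repeat case: eqP => ?; simpl; lia.
Qed.

Lemma cnt0 n : 2 * \sum_(i < n) (c0 i : nat) = V n.
Proof.
elim: n => [|n IH]; first by rewrite big_ord0.
by rewrite big_ord_recr /= mulnDr IH Vstep0.
Qed.

Lemma cnt1 n : 2 * (\sum_(i < n) (c1 i : nat) + c1 n) = V n.
Proof.
elim: n => [|n IH]; first by rewrite big_ord0.
by rewrite big_ord_recr /= Vstep1 -IH mulnDr.
Qed.

Lemma sep u v w : c0 v -> c0 w -> (v.+1 == u) || (u.+1 == v) ->
  (w.+1 == u) || (u.+1 == w) -> v = w.
Proof. rewrite /c0 => h1 h2 /orP[/eqP|/eqP] ? /orP[/eqP|/eqP] ?; lia. Qed.

Section P.
Variable n : nat.
Let adj := @path_adj n.

Lemma lower (f : {ffun 'I_n -> 'I_3}) : is_222_fun adj f -> V n <= weight f.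
Proof.
move=> /forallP hf.
rewrite -cnt0 /weight.
have -> : 2 * \sum_(i < n) (c0 i : nat) = \sum_(v : 'I_n | c0 v) 2.
  rewrite big_distrr [RHS]big_mkcond /=; apply: eq_bigr => i _; case: (c0 i) => //.
apply: (@leq_trans (\sum_(v : 'I_n | c0 v) \sum_(u | adj v u) (f u : nat))).
  by apply: leq_sum => i _; apply: hf.
have -> : \sum_(v : 'I_n | c0 v) \sum_(u | adj v u) (f u : nat)
   = \sum_u (f u : nat) * \sum_(v : 'I_n | c0 v) (adj v u : nat).
  rewrite (exchange_big_dep xpredT) //=. 
  apply: eq_bigr => u _; rewrite big_distrr /= big_mkcondr /=.
  apply: eq_bigr => v _; case: (adj v u) => /=; rewrite ?muln1 ?muln0 //.
apply: leq_sum => u _.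
rewrite -[X in _ <= X]muln1 leq_mul2l; apply/orP; right.
rewrite -big_mkcondr /= sum1_card.
apply/card_le1_eqP => v w; rewrite !unfold_in /= => /andP[hv av] /andP[hw aw].
apply: val_inj; exact: (@sep u w v hw hv aw av).
Qed.

Definition two3 : 'I_3 := Ordinal (isT : 2 < 3).
Definition fof (S : {set 'I_n}) : {ffun 'I_n -> 'I_3} :=
  [ffun u => if u \in S then two3 else ord0].

Lemma weight_fof S : weight (fof S) = 2 * #|S|.
Proof.
rewrite /weight -sum1_card big_distrr /= [RHS]big_mkcond /=.
by apply: eq_bigr => u _; rewrite ffunE; case: (u \in S).
Qed.

Lemma fof_222 S : is_total_dom adj S -> is_222_fun adj (fof S).
Proof.
move=> /forallP hS; apply/forallP => v.
have /existsP[u /andP[uS auv]] := hS v.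
rewrite (bigD1 u) //= ffunE uS /=.
exact: leq_addr.
Qed.

Lemma A1 {v} : c0 v -> c1 v.+1.
Proof. rewrite /c0 /c1 => h; have : v.+1 %% 4 = 1 \/ v.+1 %% 4 = 2 by lia. by case=> ->. Qed.
Lemma A2 {v} : c0 v -> n <= v.+1 -> v < n -> c1 n.
Proof. rewrite /c0 /c1 => h h1 h2; have : n %% 4 = 1 \/ n %% 4 = 2 by lia. by case=> ->. Qed.
Lemma A3 {v} : ~~ c0 v -> c1 v.-1 /\ 1 < v.
Proof. rewrite /c0 /c1 -leqNgt => h; have : (v.-1 %% 4 = 1 \/ v.-1 %% 4 = 2) /\ 1 < v by lia. by case=> [[->|->]]. Qed.

Definition S0 : {set 'I_n} := [set i : 'I_n | c1 i || (c1 n && (val i == n - 2))].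

Lemma S0_tdom : 2 <= n -> is_total_dom adj S0.
Proof.
move=> n2; apply/forallP => v; apply/existsP.
case hv: (c0 v).
  case: (ltnP v.+1 n) => hn.
    exists (Ordinal hn); rewrite inE A1 //= /adj /path_adj /=; by rewrite eqxx.
  have c1n := A2 hv hn (ltn_ord v).
  have hlt : n - 2 < n by lia.
  exists (Ordinal hlt); rewrite inE c1n eqxx orbT /= /adj /path_adj /=.
  apply/orP; right; apply/eqP; have := ltn_ord v; lia.
have [h1 h2] := A3 (negbT hv).
have hlt : v.-1 < n by have := ltn_ord v; lia.
exists (Ordinal hlt); rewrite inE h1 /= /adj /path_adj /=.
apply/orP; right; apply/eqP; lia.
Qed.

Lemma S0_card : 2 * #|S0| <= V n.
Proof.
rewrite -cnt1 leq_mul2l /=.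
have -> : S0 = [set i : 'I_n | c1 i] :|: [set i : 'I_n | c1 n && (val i == n - 2)].
  by apply/setP => i; rewrite !inE.
rewrite cardsU; apply: leq_trans (leq_subr _ _) _; apply: leq_add.
  rewrite -sum1_card big_mkcond /=; apply: leq_sum => i _; rewrite inE; by case: (c1 i).
case: (c1 n).
  apply/card_le1_eqP => v w; rewrite !inE /= => /eqP h1 /eqP h2; apply: val_inj => /=; by rewrite h1 h2.
rewrite leqn0 cards_eq0; apply/eqP/setP => i; by rewrite !inE.
Qed.

Lemma minle_seq (T : eqType) (P : pred T) (F : T -> nat) d x0 (r : seq T) : x0 \in r -> P x0 ->
  \big[minn/d]_(x <- r | P x) F x <= F x0.
Proof.
elim: r => // y r IH; rewrite in_cons big_cons => /orP[/eqP<- | hr] hP.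
  by rewrite hP geq_minl.
case: (P y); last exact: IH.
by rewrite geq_min IH ?orbT.
Qed.

Lemma minle (T : finType) (P : pred T) (F : T -> nat) d x0 : P x0 ->
  \big[minn/d]_(x | P x) F x <= F x0.
Proof. by move=> h; apply: minle_seq => //; apply: mem_index_enum. Qed.

End P.

Theorem proposition22 (n : nat) : 3 <= n ->
  gamma222 (@path_adj n) = 2 * gamma_t (@path_adj n) /\
  2 * gamma_t (@path_adj n) =
    (if n %% 4 == 0 then n
     else if n %% 4 == 2 then n + 2
     else n + 1).
Proof.
move=> n3.
have Vle : V n <= 2 * n by rewrite /V; repeat case: eqP => ?; lia.
have tdom := @S0_tdom n (ltnW n3).
have hg : gamma222 (@path_adj n) = V n.
  apply/eqP; rewrite eqn_leq; apply/andP; split.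
    rewrite /gamma222; apply: leq_trans (minle _ _ _ _ _ (@fof_222 n _ tdom)) _.
    by rewrite weight_fof; apply: S0_card.
  rewrite /gamma222; elim/big_ind: _.
  - by rewrite card_ord.
  - by move=> x y hx hy; rewrite leq_min hx hy.
  - by move=> f hf; apply: lower.
have ht : 2 * gamma_t (@path_adj n) = V n.
  apply/eqP; rewrite eqn_leq; apply/andP; split.
    apply: leq_trans _ (S0_card n); rewrite leq_mul2l /=.
    exact: (minle _ _ _ _ _ tdom).
  rewrite /gamma_t; elim/big_ind: _.
  - by rewrite card_ord.
  - by move=> x y hx hy; lia.
  - by move=> S hS; rewrite -weight_fof; apply: lower; apply: fof_222.
by rewrite hg ht.
Qed.
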